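(* There exist preference-based argumentation frameworks $AF_p=(AR,Attacks,Prefs)$ and $AF'_p=(AR',Attacks',Prefs')$ with $AF_p\preceq_{NP}AF'_p$ such that $\tau_{preferred}(AF'_p)\subseteq AR$ but $\tau_{preferred}(AF'_p)\neq\tau_{preferred}(AF_p)$.
   Context: A preference-based argumentation framework is a triple $(AR,Attacks,Prefs)$ where $AR$ is a finite set of arguments, $Attacks\subseteq AR\times AR$ (with $(b,a)\in Attacks$ read ''$b$ attacks $a$''), and $Prefs$ is a partial or total ordering on $AR$, written $a\succeq b$. The set of acceptable arguments is $\tau_{preferred}(AF_p)=\{a\in AR: \text{for every } b\in AR,\ (b,a)\in Attacks \text{ implies } a\succeq b\}$. $AF'_p=(AR',Attacks',Prefs')$ is a normal expansion of $AF_p=(AR,Attacks,Prefs)$, written $AF_p\preceq_{NP}AF'_p$, iff $AR\subseteq AR'$, $Attacks\subseteq Attacks'$, every $(a,b)\in Attacks'\setminus Attacks$ has $a\in AR'\setminus AR$ or $b\in AR'\setminus AR$, $Prefs\subseteq Prefs'$, and every $(a\succeq b)\in Prefs'\setminus Prefs$ has $a\in AR'\setminus AR$ or $b\in AR'\setminus AR$. *)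

(* Defs.v *)
From mathcomp Require Import all_boot all_order.
Set Implicit Arguments. Unset Strict Implicit. Unset Printing Implicit Defensive.

(* A preference-based argumentation framework over a finite universe T of
   possible arguments: AR is the (finite) set of arguments, Attacks a set of
   pairs (b,a) meaning "b attacks a", Prefs a set of pairs (a,b) meaning
   "a >= b". *)
Record PAF (T : finType) := mkPAF {
  AR : {set T};
  Attacks : {set T * T};
  Prefs : {set T * T}
}.

Definition pref_ge (T : finType) (F : PAF T) (a b : T) : bool := (a, b) \in Prefs F.

Definition wf_PAF (T : finType) (F : PAF T) : Prop :=
  [/\ (forall b a, (b, a) \in Attacks F -> (b \in AR F) && (a \in AR F)),
      (forall a b, pref_ge F a b -> (a \in AR F) && (b \in AR F)),
      (forall a, a \in AR F -> pref_ge F a a),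
      (forall a b, pref_ge F a b -> pref_ge F b a -> a = b)
    & (forall a b c, pref_ge F a b -> pref_ge F b c -> pref_ge F a c)].

Definition tau_preferred (T : finType) (F : PAF T) : {set T} :=
  [set a in AR F | [forall b in AR F, ((b, a) \in Attacks F) ==> pref_ge F a b]].

Definition normal_expansion (T : finType) (F F' : PAF T) : Prop :=
  [/\ AR F \subset AR F',
      Attacks F \subset Attacks F',
      (forall a b, (a, b) \in Attacks F' -> (a, b) \notin Attacks F ->
          (a \in AR F' :\: AR F) || (b \in AR F' :\: AR F)),
      Prefs F \subset Prefs F'
    & (forall a b, (a, b) \in Prefs F' -> (a, b) \notin Prefs F ->
          (a \in AR F' :\: AR F) || (b \in AR F' :\: AR F))].

(* Main.v *)
Require Import Defs.
From mathcomp Require Import all_boot all_order.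

Theorem proposition49 :
  exists (T : finType) (F F' : PAF T),
    [/\ wf_PAF F, wf_PAF F', normal_expansion F F',
        tau_preferred F' \subset AR F
      & tau_preferred F' != tau_preferred F].
Proof.
exists bool, (mkPAF [set true] set0 [set (true,true)]),
  (mkPAF setT [set (true,false); (false,true)] [set (true,true); (false,false)]).
rewrite /wf_PAF /normal_expansion /pref_ge /=.
split; [split| split| split | |];
  try (by move=> [] [] //=; rewrite !inE);
  try (by move=> [] [] [] //=; rewrite !inE);
  try (by move=> [] //=; rewrite !inE);
  try (by apply/subsetP => -[[] []]; rewrite !inE).
- by apply/subsetP => -[]; rewrite !inE.
- apply/subsetP => x; rewrite /tau_preferred !inE /=.
  by move/forallP/(_ (~~ x)); case: x; rewrite /pref_ge !inE.
- apply/negP => /eqP/setP/(_ true); rewrite /tau_preferred /pref_ge !inE /=.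
  have -> : [forall b in [set true], ((b, true) \in (set0 : {set bool*bool})) ==> ((true, b) \in [set (true,true)])] = true.
    by apply/forallP => -[]; rewrite !inE.
  have -> : [forall b in [set: bool], ((b, true) \in [set (true, false); (false, true)]) ==> ((true, b) \in [set (true,true); (false,false)])] = false.
    by apply/negbTE/forallPn; exists false; rewrite !inE.
  by [].
Qed.
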